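(* Let $(s_1,\dots,s_n)$ be an abstract of degree $m$ with $s_1=1$, and let $(s_i,a_i,b_i)_{1\le i\le n}$ be any associated history. Then $$\#\{1\le i<n:\varpi_i=0\}\le\tfrac14n+\tfrac34m.$$
   Context: Fix $m_0\ge1$. An abstract of degree $m\in\{0,\dots,m_0\}$ is a sequence $(s_1,\dots,s_n)\in\{\pm1\}^n$ with $m+\sum_{i=1}^ns_i=0$ and $0<m+\sum_{i=1}^js_i\le m_0$ for all $1\le j<n$. An associated history is a sequence $(s_i,a_i,b_i)_{1\le i\le n}$ with $a_i\in\mathbb N$, $b_i\in\mathbb N\setminus\{0\}$, $a_i\ne b_i$, together with index sets $\omega_0=\{0,\dots,m\}$, $\omega_i=\omega_{i-1}\cup\{b_i\}$ if $s_i=1$ and $\omega_i=\omega_{i-1}\setminus\{b_i\}$ if $s_i=-1$, such that: if $s_i=1$ then $a_i\in\omega_{i-1}$ and $b_i=1+\max(m,a_1,b_1,\dots,a_{i-1},b_{i-1})$; if $s_i=-1$ then $a_i\in\omega_{i-1}$ and $b_i\in\omega_{i-1}\setminus\{a_i,0\}$; and if $(s_i,s_{i+1})=(1,-1)$ then $(a_i,b_i)\ne(a_{i+1},b_{i+1})$. Let $S=(n+m)/2$ (all indices used lie in $\{0,\dots,S\}$). Wave vectors: with formal variables $k_1,\dots,k_S\in\mathbb R^d$, set $q^0_0=-\sum_{j=1}^mk_j$, $q^0_j=k_j$ for $1\le j\le m$, $q^0_j=0$ for $m<j\le S$; for $i\ge1$: if $s_i=1$, $q^i_{a_i}=q^{i-1}_{a_i}-k_{b_i}$,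 $q^i_{b_i}=k_{b_i}$, $q^i_j=q^{i-1}_j$ otherwise; if $s_i=-1$, $q^i_{a_i}=q^{i-1}_{a_i}+q^{i-1}_{b_i}$, $q^i_{b_i}=0$, $q^i_j=q^{i-1}_j$ otherwise. Each $q^i_j$ is an integer linear combination of $k_1,\dots,k_S$. For $1\le i<n$, set $\varpi_i=1$ if either $\omega_i\setminus\{0,\dots,m\}\ne\emptyset$, or there exist $1\le j\le m<\ell\le S$ such that the coefficient of $k_\ell$ in $q^i_j$ is nonzero; otherwise $\varpi_i=0$. *)

(* Defs.v *)
(* Indices of the abstract/history are 1-based as in the paper:
   s_i = nth 0 s i.-1, a_i = nth 0 a i.-1, b_i = nth 0 b i.-1, n = size s. *)
From mathcomp Require Import all_boot all_order all_algebra.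
Set Implicit Arguments. Unset Strict Implicit. Unset Printing Implicit Defensive.
Import Order.TTheory GRing.Theory Num.Theory.

Local Open Scope ring_scope.

Definition partial_height (m : nat) (s : seq int) (j : nat) : int :=
  m%:Z + \sum_(x <- take j s) x.

Definition is_abstract (m0 m : nat) (s : seq int) : Prop :=
  [/\ (m <= m0)%N,
      all (fun x => (x == 1) || (x == -1)) s,
      m%:Z + \sum_(x <- s) x = 0 &
      forall j : nat, (1 <= j < size s)%N ->
        0 < partial_height m s j <= m0%:Z].

(* the index sets omega_i, as duplicate-free lists of naturals *)
Fixpoint omega (m : nat) (s : seq int) (b : seq nat) (i : nat) : seq nat :=
  match i with
  | 0 => iota 0 m.+1
  | i'.+1 =>
      if nth 0 s i' == 1 then nth 0%N b i' :: omega m s b i'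
      else [seq x <- omega m s b i' | x != nth 0%N b i']
  end.

Definition is_history (m : nat) (s : seq int) (a b : seq nat) : Prop :=
  [/\ size a = size s, size b = size s,
      (forall i : nat, (1 <= i <= size s)%N ->
        let ai := nth 0%N a i.-1 in
        let bi := nth 0%N b i.-1 in
        [/\ (0 < bi)%N, ai != bi,
            (nth 0 s i.-1 = 1 ->
               ai \in omega m s b i.-1 /\
               bi = (maxn m (\max_(k < i.-1) maxn (nth 0%N a k) (nth 0%N b k))).+1) &
            (nth 0 s i.-1 = -1 ->
               [/\ ai \in omega m s b i.-1, bi \in omega m s b i.-1,
                   bi != ai & bi != 0%N])]) &
      (forall i : nat, (1 <= i < size s)%N ->
        nth 0 s i.-1 = 1 -> nth 0 s i = -1 ->
        (nth 0%N a i.-1, nth 0%N b i.-1) != (nth 0%N a i, nth 0%N b i))].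

(* Wave vectors: q m s a b i j l is the (integer) coefficient of k_l in q^i_j. *)
Fixpoint wave (m : nat) (s : seq int) (a b : seq nat) (i : nat) : nat -> nat -> int :=
  match i with
  | 0 => fun j l =>
      if j == 0%N then (if (1 <= l <= m)%N then -1 else 0)
      else if (j <= m)%N && (l == j) then 1 else 0
  | i'.+1 =>
      let p := wave m s a b i' in
      let ai := nth 0%N a i' in
      let bi := nth 0%N b i' in
      if nth 0 s i' == 1 then
        fun j l => if j == ai then p j l - (l == bi)%:Z
                   else if j == bi then (l == bi)%:Z
                   else p j l
      else
        fun j l => if j == ai then p ai l + p bi l
                   else if j == bi then 0
                   else p j l
  end.

Definition bigS (m : nat) (s : seq int) : nat := ((size s + m) %/ 2)%N.

Definition varpi (m : nat) (s : seq int) (a b : seq nat) (i : nat) : bool :=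
  has (fun x => (m < x)%N) (omega m s b i)
  || has (fun j => has (fun l => wave m s a b i j l != 0)
                       (iota m.+1 (bigS m s - m)))
         (iota 1 m).

(* Main.v *)
Require Import Defs.
From mathcomp Require Import all_boot all_order all_algebra.
From mathcomp Require Import zify.
Set Implicit Arguments. Unset Strict Implicit. Unset Printing Implicit Defensive.
Import Order.TTheory GRing.Theory Num.Theory.

Definition Mx (m : nat) (a b : seq nat) (k : nat) : nat :=
  maxn m (\max_(j < k) maxn (nth 0%N a j) (nth 0%N b j)).

Lemma MxS m a b k : Mx m a b k.+1 = maxn (Mx m a b k) (maxn (nth 0 a k) (nth 0 b k)).
Proof. by rewrite /Mx big_ord_recr /= maxnA. Qed.

Lemma omegaS m s b k : omega m s b k.+1 =
  if nth 0%R s k == 1%R then nth 0%N b k :: omega m s b k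
  else [seq x <- omega m s b k | x != nth 0%N b k].
Proof. by []. Qed.

Lemma m1n1 : ((-1 : int) == 1%R) = false. Proof. by []. Qed.

Lemma hist_at m s a b k : is_history m s a b -> (k < size s)%N ->
  [/\ (0 < nth 0 b k)%N, nth 0 a k != nth 0 b k,
      (nth 0%R s k = 1%R -> nth 0 a k \in omega m s b k /\ nth 0 b k = (Mx m a b k).+1) &
      (nth 0%R s k = (-1)%R -> [/\ nth 0 a k \in omega m s b k, nth 0 b k \in omega m s b k,
           nth 0 b k != nth 0 a k & nth 0 b k != 0%N])].
Proof. case=> _ _ H _ Hk. exact: (H k.+1 Hk). Qed.

Lemma pm1 m0 m s k : is_abstract m0 m s -> (k < size s)%N ->
  nth 0%R s k = 1%R \/ nth 0%R s k = (-1)%R.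
Proof. case=> _ /allP H _ _ Hk. have := H _ (mem_nth 0%R Hk).
by case/orP=> /eqP ->; [left|right]. Qed.

Lemma zero_in_omega m0 m s a b k : is_abstract m0 m s -> is_history m s a b ->
  (k <= size s)%N -> 0%N \in omega m s b k.
Proof.
move=> HA HH; elim: k => [|k IH] Hk; first by rewrite /= in_cons eqxx.
rewrite omegaS. have Hk' : (k < size s)%N by [].
have IH' := IH (ltnW Hk').
case: ifP => _; first by rewrite in_cons IH' orbT.
have [Hb _ _ _] := hist_at HH Hk'.
by rewrite mem_filter IH' andbT eq_sym -lt0n.
Qed.

Lemma bound m0 m s a b k : is_abstract m0 m s -> is_history m s a b -> (k <= size s)%N ->
  (forall x, x \in omega m s b k -> x <= Mx m a b k)%N /\
  (Mx m a b k <= m + count (fun x => x == 1%R) (take k s))%N.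
Proof.
move=> HA HH; elim: k => [|k IH] Hk.
  split; last by rewrite /Mx big_ord0 maxn0 take0 addn0.
  move=> x; rewrite /Mx big_ord0 maxn0. rewrite (_ : omega m s b 0 = iota 0 m.+1) // mem_iota; lia.
have Hk' : (k < size s)%N by [].
have [IH1 IH2] := IH (ltnW Hk').
have [_ _ Hp Hm] := hist_at HH Hk'.
rewrite (take_nth 0%R Hk') -cats1 count_cat MxS omegaS /=.
case: (pm1 HA Hk') => Hs.
- have [Ha Hb] := Hp Hs. rewrite Hs eqxx /=. move: IH2 => /= IH2.
  have Hak := IH1 _ Ha. rewrite Hb. split.
  + move=> x; rewrite in_cons => /orP [/eqP -> | /IH1]; lia.
  + lia.
- have [Ha Hb _ _] := Hm Hs. rewrite Hs m1n1 /=. move: IH2 => /= IH2.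
  have Hak := IH1 _ Ha; have Hbk := IH1 _ Hb. split.
  + move=> x; rewrite mem_filter => /andP [_ /IH1]; lia.
  + lia.
Qed.

Lemma sum_pm (s : seq int) : all (fun x => (x == 1) || (x == -1))%R s ->
  ((2 * count (fun x => x == 1%R) s)%:Z = (size s)%:Z + \sum_(x <- s) x)%R.
Proof.
elim: s => [|x s IH] /=; first by rewrite big_nil.
case/andP=> /orP [] /eqP -> /IH /= {}IH; rewrite big_cons /=; lia.
Qed.

Lemma count_pm m0 m s : is_abstract m0 m s ->
  (2 * count (fun x => x == 1%R) s + m = size s)%N.
Proof. case=> _ Hall Hsum _. have := sum_pm Hall. lia. Qed.
Lemma count_take_le (s : seq int) k p : (count p (take k s) <= count p s)%N.
Proof. by rewrite -{2}(cat_take_drop k s) count_cat leq_addr. Qed.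

Lemma N_le_bigS m0 m s a b k : is_abstract m0 m s -> is_history m s a b -> (k < size s)%N ->
  nth 0%R s k = 1%R -> ((Mx m a b k).+1 <= bigS m s)%N.
Proof.
move=> HA HH Hk Hs.
have [_ H2] := bound HA HH (ltnW Hk).
have Hc := count_pm HA.
have Ht' := count_take_le s k.+1 (fun x => x == 1%R).
rewrite (take_nth 0%R Hk) -cats1 count_cat /= Hs eqxx /= in Ht'.
move: H2 Hc => /= H2 /= Hc.
set C := count _ s in Hc Ht' *. set D := count _ (take k s) in H2 Ht'. rewrite /bigS -Hc. have -> : 2 * C + m + m = (C + m) * 2 by lia. rewrite mulnK //. lia.
Qed.

Definition cnt m s b k := #|[set x : 'I_m.+1 | val x \in omega m s b k]|.

Lemma cnt_sub m0 m s a b k : is_abstract m0 m s -> is_history m s a b -> (k < size s)%N ->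
  [set x : 'I_m.+1 | val x \in omega m s b k.+1] \subset [set x : 'I_m.+1 | val x \in omega m s b k].
Proof.
move=> HA HH Hk; apply/subsetP => x; rewrite !inE omegaS.
have [_ _ Hp Hm] := hist_at HH Hk.
case: (pm1 HA Hk) => Hs.
- have [_ Hb] := Hp Hs. rewrite Hs eqxx in_cons => /orP [/eqP Hx|//].
  exfalso; have := ltn_ord x. rewrite Hx Hb /Mx. lia.
- rewrite Hs m1n1 mem_filter. by case/andP.
Qed.

Lemma cnt_mono m0 m s a b i j : is_abstract m0 m s -> is_history m s a b ->
  (i <= j <= size s)%N -> (cnt m s b j <= cnt m s b i)%N.
Proof.
move=> HA HH /andP [Hij Hj]; elim: j Hij Hj => [|j IH] Hij Hj.
  by move: Hij; rewrite leqn0 => /eqP ->.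
case: (leqP i j) => Hij'.
- apply: leq_trans (IH Hij' (ltnW Hj)). exact: subset_leq_card (cnt_sub HA HH Hj).
- have -> : i = j.+1 by lia. by [].
Qed.

Lemma cnt_drop m0 m s a b k : is_abstract m0 m s -> is_history m s a b -> (k < size s)%N ->
  nth 0%R s k = (-1)%R -> (nth 0 b k <= m)%N -> (cnt m s b k.+1 < cnt m s b k)%N.
Proof.
move=> HA HH Hk Hs Hbm; apply: proper_card; apply/properP; split; first exact: cnt_sub HA HH Hk.
have [_ _ _ Hm] := hist_at HH Hk. have [_ Hb _ _] := Hm Hs.
have Hbm' : (nth 0 b k < m.+1)%N by [].
have Hnot : nth 0 b k \notin omega m s b k.+1 by rewrite omegaS Hs m1n1 mem_filter eqxx.
exists (Ordinal Hbm'); rewrite inE; [exact: Hb | exact: Hnot].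
Qed.

Lemma cnt_pos m0 m s a b k : is_abstract m0 m s -> is_history m s a b -> (k <= size s)%N ->
  (0 < cnt m s b k)%N.
Proof.
move=> HA HH Hk; apply/card_gt0P; exists ord0; rewrite inE /=. exact: zero_in_omega HA HH Hk.
Qed.

Lemma cnt_le m s b k : (cnt m s b k <= m.+1)%N.
Proof. by rewrite -[X in (_ <= X)%N]card_ord; apply: max_card. Qed.

Lemma nv_le m s a b k : ~~ varpi m s a b k -> forall x, x \in omega m s b k -> (x <= m)%N.
Proof. rewrite /varpi negb_or => /andP [/hasPn H _] x /H. by rewrite -leqNgt. Qed.

Lemma nv_wave m s a b k : ~~ varpi m s a b k -> forall j l, (1 <= j <= m)%N ->
  (m < l <= bigS m s)%N -> wave m s a b k j l = 0%R.
Proof.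
rewrite /varpi negb_or => /andP [_ /hasPn H] j l Hj Hl.
have Hj' : j \in iota 1 m by rewrite mem_iota; lia.
have Hl' : l \in iota m.+1 (bigS m s - m) by rewrite mem_iota; lia.
have /hasPn H2 := H j Hj'.
have := H2 l Hl'. by rewrite negbK => /eqP.
Qed.

Lemma nv0 m s a b : ~~ varpi m s a b 0.
Proof.
rewrite /varpi negb_or; apply/andP; split.
  apply/hasPn => x; rewrite (_ : omega m s b 0 = iota 0 m.+1) // mem_iota; lia.
apply/hasPn => j; rewrite mem_iota => Hj; apply/hasPn => l; rewrite mem_iota => Hl /=.
have -> : (j == 0%N) = false by apply/eqP; lia.
have -> : (l == j) = false by apply/eqP; lia.
by rewrite andbF.
Qed.

Lemma last_minus m0 m s a b k : is_abstract m0 m s -> is_history m s a b -> (k < size s)%N ->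
  ~~ varpi m s a b k.+1 -> nth 0%R s k = (-1)%R.
Proof.
move=> HA HH Hk V; case: (pm1 HA Hk) => // Hs.
have [_ _ Hp _] := hist_at HH Hk. have [_ Hb] := Hp Hs.
have := nv_le V (x := nth 0 b k). rewrite omegaS Hs eqxx in_cons eqxx Hb /Mx => /(_ isT). lia.
Qed.
Lemma wave_plus m s a b k j l : nth 0%R s k = 1%R ->
  wave m s a b k.+1 j l = if j == nth 0 a k then (wave m s a b k j l - (l == nth 0 b k)%:Z)%R
     else if j == nth 0 b k then ((l == nth 0 b k)%:Z)%R else wave m s a b k j l.
Proof. by move=> Hs; rewrite /= Hs eqxx. Qed.

Lemma wave_minus m s a b k j l : nth 0%R s k = (-1)%R ->
  wave m s a b k.+1 j l = if j == nth 0 a k then (wave m s a b k (nth 0 a k) l + wave m s a b k (nth 0 b k) l)%R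
     else if j == nth 0 b k then 0%R else wave m s a b k j l.
Proof. by move=> Hs; rewrite /= Hs m1n1. Qed.

Lemma waveW m0 m s a b t : is_abstract m0 m s -> is_history m s a b -> (t.+2 < size s)%N ->
  ~~ varpi m s a b t -> nth 0%R s t = 1%R -> nth 0%R s t.+1 = (-1)%R ->
  nth 0 b t.+1 = nth 0 b t -> varpi m s a b t.+2.
Proof.
move=> HA HH Hts Vt Hs0 Hs1 Eb.
have Ht0 : (t < size s)%N by lia.
have Ht1 : (t.+1 < size s)%N by lia.
have [_ _ Hp0 _] := hist_at HH Ht0. have [Ha0 Hb0] := Hp0 Hs0.
have [_ _ _ Hm1] := hist_at HH Ht1. have [Ha1 _ Hba1 _] := Hm1 Hs1.
have HAAp : nth 0 a t != nth 0 a t.+1.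
  case: HH => _ _ _ Hd. have := Hd t.+1 Ht1 Hs0 Hs1. rewrite /= Eb.
  apply: contra => /eqP ->. by rewrite eqxx.
have HNS : (nth 0 b t <= bigS m s)%N by rewrite Hb0; exact: N_le_bigS HA HH Ht0 Hs0.
move: Hb0 Eb Ha0 Ha1 Hba1 HAAp HNS.
set N := nth 0 b t. set A := nth 0 a t. set A' := nth 0 a t.+1.
move=> Hb0 Eb Ha0 Ha1 Hba1 HAAp HNS.
have HA0 := nv_le Vt Ha0.
have HNm : (m < N)%N by rewrite Hb0 /Mx; lia.
have HA'N : A' != N by rewrite -Eb eq_sym.
move: Ha1; rewrite omegaS Hs0 eqxx in_cons (negbTE HA'N) /= => Ha1.
have HA1 := nv_le Vt Ha1.
have W0 := nv_wave Vt.
have HNN : N \in iota m.+1 (bigS m s - m) by rewrite mem_iota; lia.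
rewrite /varpi; apply/orP; right; apply/hasP.
case: (eqVneq A' 0%N) => HA'0.
- have HA1' : (1 <= A <= m)%N by move: HAAp; rewrite HA'0 -lt0n => ->.
  exists A; first by rewrite mem_iota; lia.
  apply/hasP; exists N => //.
  rewrite wave_minus // Eb -/A -/A' -/N.
  have -> : (A == A') = false by apply/negbTE.
  have -> : (A == N) = false by apply/eqP; lia.
  rewrite wave_plus // -/A -/N eqxx W0 //; lia.
- have HA1' : (1 <= A' <= m)%N by rewrite lt0n HA'0.
  exists A'; first by rewrite mem_iota; lia.
  apply/hasP; exists N => //.
  rewrite wave_minus // Eb -/A -/A' -/N eqxx !wave_plus // -/A -/N.
  have -> : (A' == A) = false by apply/negbTE; rewrite eq_sym.
  have -> : (A' == N) = false by apply/negbTE.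
  have -> : (N == A) = false by apply/eqP; lia.
  rewrite eqxx W0 //; lia.
Qed.
Lemma key m0 m s a b t t' : is_abstract m0 m s -> is_history m s a b ->
  ~~ varpi m s a b t -> ~~ varpi m s a b t' -> (t < t')%N -> (t' <= t + 3)%N ->
  (t' < size s)%N -> (cnt m s b t' < cnt m s b t)%N.
Proof.
move=> HA HH Vt Vt' Htt' Ht3 Hts.
have drop k : (t <= k)%N -> (k < t')%N -> nth 0%R s k = (-1)%R -> (nth 0 b k <= m)%N ->
    (cnt m s b t' < cnt m s b t)%N.
  move=> H1 H2 Hs Hb.
  have Hk : (k < size s)%N by lia.
  have := cnt_drop HA HH Hk Hs Hb.
  have Hi1 : (k.+1 <= t' <= size s)%N by lia.
  have Hi2 : (t <= k <= size s)%N by lia.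
  have := cnt_mono HA HH Hi1. have := cnt_mono HA HH Hi2. lia.
have plusN k : (k < size s)%N -> nth 0%R s k = 1%R -> (m < nth 0 b k)%N.
  move=> Hk Hs. have [_ _ Hp _] := hist_at HH Hk. have [_ ->] := Hp Hs. rewrite /Mx. lia.
have : t' = t.+1 \/ t' = t.+2 \/ t' = t.+3 by lia.
case=> [Et|[Et|Et]]; subst t'.
- have Hs := last_minus HA HH (ltnW Hts) Vt'.
  have [_ _ _ Hm] := hist_at HH (ltnW Hts). have [_ Hb _ _] := Hm Hs.
  apply: (drop t); [lia | lia | done | exact: nv_le Vt _ Hb].
- have Ht1 : (t.+1 < size s)%N by lia.
  have Hs1 := last_minus HA HH Ht1 Vt'.
  have Ht0 : (t < size s)%N by lia.
  have [_ _ _ Hm1] := hist_at HH Ht1. have [_ Hb1 _ _] := Hm1 Hs1.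
  case: (leqP (nth 0 b t.+1) m) => Hb1m; first by apply: (drop t.+1) => //; lia.
  case: (pm1 HA Ht0) => Hs0.
  + exfalso.
    have E : nth 0 b t.+1 = nth 0 b t.
      move: Hb1; rewrite omegaS Hs0 eqxx in_cons => /orP [/eqP //| /(nv_le Vt)]; lia.
    have := waveW HA HH Hts Vt Hs0 Hs1 E. by rewrite (negbTE Vt').
  + have [_ _ _ Hm0] := hist_at HH Ht0. have [_ Hb0 _ _] := Hm0 Hs0.
    apply: (drop t); [lia | lia | done | exact: nv_le Vt _ Hb0].
- have Ht2 : (t.+2 < size s)%N by lia.
  have Hs2 := last_minus HA HH Ht2 Vt'.
  have Ht1 : (t.+1 < size s)%N by lia.
  have Ht0 : (t < size s)%N by lia.
  have [_ _ _ Hm2] := hist_at HH Ht2. have [_ Hb2 _ _] := Hm2 Hs2.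
  case: (leqP (nth 0 b t.+2) m) => Hb2m; first by apply: (drop t.+2) => //; lia.
  case: (pm1 HA Ht0) => Hs0; last first.
    have [_ _ _ Hm0] := hist_at HH Ht0. have [_ Hb0 _ _] := Hm0 Hs0.
    apply: (drop t); [lia | lia | done | exact: nv_le Vt _ Hb0].
  have HN1 := plusN _ Ht0 Hs0.
  case: (pm1 HA Ht1) => Hs1.
  + exfalso.
    have HN2 := plusN _ Ht1 Hs1.
    have [_ _ Hp1 _] := hist_at HH Ht1. have [_ Eb1] := Hp1 Hs1.
    have Hlt : (nth 0 b t < nth 0 b t.+1)%N by rewrite Eb1 MxS; lia.
    case: (eqVneq (nth 0 b t.+2) (nth 0 b t)) => E2.
    * have : nth 0 b t.+1 \in omega m s b t.+3.
        rewrite omegaS Hs2 m1n1 mem_filter omegaS Hs1 eqxx in_cons eqxx andbT E2.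
        apply/eqP; lia.
      move/(nv_le Vt'); lia.
    * have : nth 0 b t \in omega m s b t.+3.
        rewrite omegaS Hs2 m1n1 mem_filter omegaS Hs1 eqxx in_cons omegaS Hs0 eqxx in_cons eqxx.
        by rewrite orbT andbT eq_sym.
      move/(nv_le Vt'); lia.
  + have [_ _ _ Hm1] := hist_at HH Ht1. have [_ Hb1 _ _] := Hm1 Hs1.
    case: (leqP (nth 0 b t.+1) m) => Hb1m; first by apply: (drop t.+1) => //; lia.
    exfalso.
    have E : nth 0 b t.+1 = nth 0 b t.
      move: Hb1; rewrite omegaS Hs0 eqxx in_cons => /orP [/eqP //| /(nv_le Vt)]; lia.
    move: Hb2; rewrite omegaS Hs1 m1n1 mem_filter omegaS Hs0 eqxx in_cons E.
    case/andP => /negbTE -> /= /(nv_le Vt); lia.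
Qed.

Lemma last_P (P : pred nat) T : P 0 ->
  exists T0, [/\ (T0 <= T)%N, P T0 & count P (iota 1 T) = count P (iota 1 T0)].
Proof.
move=> P0; elim: T => [|T [T0 [HT0 PT0 HC]]]; first by exists 0%N.
case PT: (P T.+1).
- by exists T.+1.
- exists T0; split => //; first by lia.
  by rewrite -[T.+1]addn1 iotaD count_cat HC add1n /= PT /= !addn0.
Qed.

Lemma comb (P : pred nat) (c : nat -> nat) N m :
  P 0 -> (c 0 <= m.+1)%N ->
  (forall i j, (i <= j <= N)%N -> (c j <= c i)%N) ->
  (forall t t', P t -> P t' -> (t < t')%N -> (t' <= t + 3)%N -> (t' <= N)%N -> (c t' < c t)%N) ->
  forall T, (T <= N)%N -> P T -> (4 * count P (iota 1 T) + 3 * c T <= T + 3 * m.+1)%N.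
Proof.
move=> P0 c0 Hmono Hkey T0'.
suff H : forall n T, (T < n)%N -> (T <= N)%N -> P T -> (4 * count P (iota 1 T) + 3 * c T <= T + 3 * m.+1)%N.
  exact: H T0'.+1 T0' (ltnSn _).
elim=> // n IH [|T] HTn HTN PT.
- rewrite /=; lia.
- have [T0 [HT0 PT0 HC]] := last_P T P0.
  have Hcnt : count P (iota 1 T.+1) = (count P (iota 1 T0)).+1.
    by rewrite -[T.+1]addn1 iotaD count_cat HC add1n /= PT addn1.
  have HT0n : (T0 < n)%N by lia.
  have HT0N : (T0 <= N)%N by lia.
  have IH0 := IH T0 HT0n HT0N PT0.
  rewrite Hcnt.
  case: (leqP (T0 + 4) T.+1) => Hd.
  + have Hr : (T0 <= T.+1 <= N)%N by lia.
    have := Hmono T0 T.+1 Hr. lia.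
  + have Hlt : (T0 < T.+1)%N by lia.
    have Hle : (T.+1 <= T0 + 3)%N by lia.
    have := Hkey T0 T.+1 PT0 PT Hlt Hle HTN. lia.
Qed.

Unset Implicit Arguments.
Theorem lemma6p9 (m0 m : nat) (s : seq int) (a b : seq nat) :
  (1 <= m0)%N ->
  is_abstract m0 m s ->
  nth 0%R s 0 = 1%R ->
  is_history m s a b ->
  (4 * count (fun i => ~~ varpi m s a b i) (iota 1 (size s).-1)
     <= size s + 3 * m)%N.
Proof.
move=> _ HA _ HH.
set P := fun i => ~~ varpi m s a b i.
have P0 : P 0 := nv0 m s a b.
have [T [HT PT HC]] := last_P (size s).-1 P0.
rewrite HC.
have Hc0 := cnt_le m s b 0.
have Hmono : forall i j, (i <= j <= (size s).-1)%N -> (cnt m s b j <= cnt m s b i)%N.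
  move=> i j Hij; apply: cnt_mono HA HH _; lia.
have Hkey : forall t t', P t -> P t' -> (t < t')%N -> (t' <= t + 3)%N -> (t' <= (size s).-1)%N ->
    (cnt m s b t' < cnt m s b t)%N.
  move=> t t' Pt Pt' H1 H2 H3. apply: (key HA HH Pt Pt' H1 H2). lia.
have := comb P0 Hc0 Hmono Hkey HT PT.
have HTs : (T <= size s)%N by lia.
have := cnt_pos HA HH HTs.
set C := count P (iota 1 T). lia.
Qed.
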